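(* Let $D\in\mathcal{L}(Y)$ have a g-Drazin inverse, and let $B\in\mathcal{L}(Y,X)$, $C\in\mathcal{L}(X,Y)$. If $DCB=0$ and $CBCB=0$, then the operator matrix $\begin{pmatrix}0&B\\ C&D\end{pmatrix}$ on $X\oplus Y$ has a g-Drazin inverse.
   Context: $X,Y$ are complex Banach spaces; $\mathcal{L}(X)$ denotes the Banach algebra of bounded linear operators on $X$, and $\mathcal{L}(Y,X)$ the bounded operators from $Y$ to $X$. An element $a$ of a unital Banach algebra $\mathcal{A}$ is quasinilpotent if $\lim_{n\to\infty}\|a^n\|^{1/n}=0$. An element $a\in\mathcal{A}$ has a g-Drazin (generalized Drazin) inverse if there exists $x\in\mathcal{A}$ with $x=xax$, $ax=xa$, and $a-a^2x$ quasinilpotent; such $x$ is unique and is denoted $a^d$. *)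

(* Defs.v *)
From Stdlib Require Import Reals Lra ClassicalEpsilon FunctionalExtensionality.
Open Scope R_scope.

Definition Cplx : Type := (R * R)%type.
Definition C0 : Cplx := (0, 0).
Definition C1 : Cplx := (1, 0).
Definition Cadd (a b : Cplx) : Cplx := (fst a + fst b, snd a + snd b).
Definition Cmul (a b : Cplx) : Cplx :=
  (fst a * fst b - snd a * snd b, fst a * snd b + snd a * fst b).
Definition Cmod (a : Cplx) : R := sqrt (fst a ^ 2 + snd a ^ 2).

Record NormedCSpace : Type := {
  vcar :> Type;
  vzero : vcar;
  vadd : vcar -> vcar -> vcar;
  vopp : vcar -> vcar;
  vscal : Cplx -> vcar -> vcar;
  vnorm : vcar -> R;
  vadd_assoc : forall x y z, vadd x (vadd y z) = vadd (vadd x y) z;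
  vadd_comm : forall x y, vadd x y = vadd y x;
  vadd_0 : forall x, vadd x vzero = x;
  vadd_opp : forall x, vadd x (vopp x) = vzero;
  vscal_1 : forall x, vscal C1 x = x;
  vscal_assoc : forall a b x, vscal a (vscal b x) = vscal (Cmul a b) x;
  vscal_distr_v : forall a x y, vscal a (vadd x y) = vadd (vscal a x) (vscal a y);
  vscal_distr_c : forall a b x, vscal (Cadd a b) x = vadd (vscal a x) (vscal b x);
  vnorm_nonneg : forall x, 0 <= vnorm x;
  vnorm_eq0 : forall x, vnorm x = 0 -> x = vzero;
  vnorm_triangle : forall x y, vnorm (vadd x y) <= vnorm x + vnorm y;
  vnorm_scal : forall a x, vnorm (vscal a x) = Cmod a * vnorm x
}.

Arguments vzero {_}.
Arguments vadd {_} _ _.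
Arguments vopp {_} _.
Arguments vscal {_} _ _.
Arguments vnorm {_} _.

Definition complete (X : NormedCSpace) : Prop :=
  forall u : nat -> X,
    (forall eps, 0 < eps -> exists N, forall m n, (N <= m)%nat -> (N <= n)%nat ->
        vnorm (vadd (u m) (vopp (u n))) < eps) ->
    exists l : X, forall eps, 0 < eps -> exists N, forall n, (N <= n)%nat ->
        vnorm (vadd (u n) (vopp l)) < eps.

Definition is_bounded_linear {X Y : NormedCSpace} (f : X -> Y) : Prop :=
  (forall x y, f (vadd x y) = vadd (f x) (f y)) /\
  (forall a x, f (vscal a x) = vscal a (f x)) /\
  (exists M, forall x, vnorm (f x) <= M * vnorm x).

Definition opnorm {X Y : NormedCSpace} (f : X -> Y) : R :=
  epsilon (inhabits 0) (is_lub (fun r => exists x : X, vnorm x <= 1 /\ r = vnorm (f x))).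

(** n-th root of a nonnegative real, r^(1/n) (with 0^(1/n) = 0). *)
Definition nroot (r : R) (n : nat) : R :=
  if Rlt_dec 0 r then Rpower r (/ INR n) else 0.

Definition opow {Z : NormedCSpace} (a : Z -> Z) (n : nat) : Z -> Z :=
  Nat.iter n (fun g z => a (g z)) (fun z => z).

Definition quasinilpotent {Z : NormedCSpace} (a : Z -> Z) : Prop :=
  Un_cv (fun n => nroot (opnorm (opow a n)) n) 0.

Definition has_gDrazin {Z : NormedCSpace} (a : Z -> Z) : Prop :=
  exists x : Z -> Z,
    is_bounded_linear x /\
    (fun z => x (a (x z))) = x /\
    (fun z => a (x z)) = (fun z => x (a z)) /\
    quasinilpotent (fun z => vadd (a z) (vopp (a (a (x z))))).

Section DirectSum.
Variables X Y : NormedCSpace.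

Definition ds_zero : X * Y := (vzero, vzero).
Definition ds_add (p q : X * Y) : X * Y := (vadd (fst p) (fst q), vadd (snd p) (snd q)).
Definition ds_opp (p : X * Y) : X * Y := (vopp (fst p), vopp (snd p)).
Definition ds_scal (a : Cplx) (p : X * Y) : X * Y := (vscal a (fst p), vscal a (snd p)).
Definition ds_norm (p : X * Y) : R := vnorm (fst p) + vnorm (snd p).

Lemma ds_add_assoc : forall x y z, ds_add x (ds_add y z) = ds_add (ds_add x y) z.
Proof. intros [] [] []; unfold ds_add; simpl; now rewrite !vadd_assoc. Qed.
Lemma ds_add_comm : forall x y, ds_add x y = ds_add y x.
Proof. intros [] []; unfold ds_add; simpl; f_equal; apply vadd_comm. Qed.
Lemma ds_add_0 : forall x, ds_add x ds_zero = x.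
Proof. intros []; unfold ds_add; simpl; now rewrite !vadd_0. Qed.
Lemma ds_add_opp : forall x, ds_add x (ds_opp x) = ds_zero.
Proof. intros []; unfold ds_add; simpl; now rewrite !vadd_opp. Qed.
Lemma ds_scal_1 : forall x, ds_scal C1 x = x.
Proof. intros []; unfold ds_scal; simpl; now rewrite !vscal_1. Qed.
Lemma ds_scal_assoc : forall a b x, ds_scal a (ds_scal b x) = ds_scal (Cmul a b) x.
Proof. intros a b []; unfold ds_scal; simpl; now rewrite !vscal_assoc. Qed.
Lemma ds_scal_distr_v : forall a x y, ds_scal a (ds_add x y) = ds_add (ds_scal a x) (ds_scal a y).
Proof. intros a [] []; unfold ds_scal, ds_add; simpl; now rewrite !vscal_distr_v. Qed.
Lemma ds_scal_distr_c : forall a b x, ds_scal (Cadd a b) x = ds_add (ds_scal a x) (ds_scal b x).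
Proof. intros a b []; unfold ds_scal, ds_add; simpl; now rewrite !vscal_distr_c. Qed.
Lemma ds_norm_nonneg : forall x, 0 <= ds_norm x.
Proof. intros [x y]; unfold ds_norm; simpl; pose proof (vnorm_nonneg X x); pose proof (vnorm_nonneg Y y); lra. Qed.
Lemma ds_norm_eq0 : forall x, ds_norm x = 0 -> x = ds_zero.
Proof.
  intros [x y]; unfold ds_norm, ds_zero; simpl; intro H.
  pose proof (vnorm_nonneg X x); pose proof (vnorm_nonneg Y y).
  rewrite (vnorm_eq0 X x), (vnorm_eq0 Y y); auto; lra.
Qed.
Lemma ds_norm_triangle : forall x y, ds_norm (ds_add x y) <= ds_norm x + ds_norm y.
Proof.
  intros [x1 y1] [x2 y2]; unfold ds_norm, ds_add; simpl.
  pose proof (vnorm_triangle X x1 x2); pose proof (vnorm_triangle Y y1 y2); lra.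
Qed.
Lemma ds_norm_scal : forall a x, ds_norm (ds_scal a x) = Cmod a * ds_norm x.
Proof. intros a []; unfold ds_norm, ds_scal; simpl; rewrite !vnorm_scal; ring. Qed.

Definition DirectSum : NormedCSpace :=
  {| vcar := (X * Y)%type; vzero := ds_zero; vadd := ds_add; vopp := ds_opp;
     vscal := ds_scal; vnorm := ds_norm;
     vadd_assoc := ds_add_assoc; vadd_comm := ds_add_comm; vadd_0 := ds_add_0;
     vadd_opp := ds_add_opp; vscal_1 := ds_scal_1; vscal_assoc := ds_scal_assoc;
     vscal_distr_v := ds_scal_distr_v; vscal_distr_c := ds_scal_distr_c;
     vnorm_nonneg := ds_norm_nonneg; vnorm_eq0 := ds_norm_eq0;
     vnorm_triangle := ds_norm_triangle; vnorm_scal := ds_norm_scal |}.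
End DirectSum.

Definition opmatrix {X Y : NormedCSpace} (B : Y -> X) (C : X -> Y) (D : Y -> Y)
  : DirectSum X Y -> DirectSum X Y :=
  fun p => (B (snd p), vadd (C (fst p)) (D (snd p))).

(* Main.v *)
Require Import Defs.
From Stdlib Require Import Reals Lra Lia ZArith List ClassicalEpsilon FunctionalExtensionality.
Import ListNotations.

Section Grp.
Variable V : NormedCSpace.
Implicit Types a b c x y : V.

Lemma add0l x : vadd vzero x = x.
Proof. rewrite vadd_comm; apply vadd_0. Qed.
Lemma addoppl x : vadd (vopp x) x = vzero.
Proof. rewrite vadd_comm; apply vadd_opp. Qed.
Lemma add_cancel_l a x y : vadd a x = vadd a y -> x = y.
Proof.
  intro H. rewrite <- (add0l x), <- (add0l y), <- (addoppl a), <- !vadd_assoc, H; reflexivity.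
Qed.
Lemma add_cancel_r a x y : vadd x a = vadd y a -> x = y.
Proof. rewrite (vadd_comm _ x), (vadd_comm _ y); apply add_cancel_l. Qed.
Lemma opp_unique a b : vadd a b = vzero -> b = vopp a.
Proof. intro H; apply (add_cancel_l a); rewrite H, vadd_opp; reflexivity. Qed.
Lemma opp_opp a : vopp (vopp a) = a.
Proof. symmetry; apply opp_unique, addoppl. Qed.
Lemma opp_zero : vopp (@vzero V) = vzero.
Proof. symmetry; apply opp_unique, vadd_0. Qed.
Lemma opp_add a b : vopp (vadd a b) = vadd (vopp a) (vopp b).
Proof.
  symmetry; apply opp_unique.
  rewrite (vadd_comm _ (vopp a)), vadd_assoc, <- (vadd_assoc _ a b), vadd_opp, vadd_0, vadd_opp; reflexivity.
Qed.
Lemma sub_eq0 a b : vadd a (vopp b) = vzero -> a = b.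
Proof. intro H. rewrite <- (opp_opp b). apply opp_unique. rewrite vadd_comm; exact H. Qed.
Lemma add_swap4 a b c x : vadd (vadd a b) (vadd c x) = vadd (vadd a c) (vadd b x).
Proof.
  rewrite <- !vadd_assoc; f_equal. rewrite !vadd_assoc; f_equal; apply vadd_comm.
Qed.

Fixpoint nsm (n : nat) (a : V) : V := match n with O => vzero | S k => vadd a (nsm k a) end.
Lemma nsm_add m n a : nsm (m + n) a = vadd (nsm m a) (nsm n a).
Proof. induction m; simpl. now rewrite add0l. now rewrite IHm, vadd_assoc. Qed.

Definition zsm (z : Z) (a : V) : V := vadd (nsm (Z.to_nat z) a) (vopp (nsm (Z.to_nat (- z)) a)).

Lemma nsm_key m n m' n' a : (m + n' = m' + n)%nat ->
  vadd (nsm m a) (vopp (nsm n a)) = vadd (nsm m' a) (vopp (nsm n' a)).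
Proof.
  intro H. apply (add_cancel_r (vadd (nsm n a) (nsm n' a))).
  rewrite <- vadd_assoc, (vadd_assoc _ (vopp (nsm n a))), addoppl, add0l, <- nsm_add.
  rewrite (vadd_comm _ (nsm n a)), <- vadd_assoc, (vadd_assoc _ (vopp (nsm n' a))), addoppl, add0l, <- nsm_add.
  now rewrite H.
Qed.

Lemma zsm_add z1 z2 a : zsm (z1 + z2) a = vadd (zsm z1 a) (zsm z2 a).
Proof.
  unfold zsm. rewrite add_swap4, <- opp_add, <- !nsm_add. apply nsm_key. lia.
Qed.
Lemma zsm_opp z a : zsm (- z) a = vopp (zsm z a).
Proof. unfold zsm. rewrite opp_add, opp_opp, Z.opp_involutive, vadd_comm; reflexivity. Qed.
Lemma zsm_1 a : zsm 1 a = a.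
Proof. unfold zsm; simpl. rewrite vadd_0, opp_zero, vadd_0; reflexivity. Qed.
Lemma zsm_0 a : zsm 0 a = vzero.
Proof. unfold zsm; simpl. rewrite opp_zero, vadd_0; reflexivity. Qed.
End Grp.

Inductive gexp := GA (n : nat) | GZ | GP (a b : gexp) | GN (a : gexp).

Fixpoint gev (V : NormedCSpace) (env : list V) (e : gexp) : V :=
  match e with
  | GA n => nth n env vzero
  | GZ => vzero
  | GP a b => vadd (gev V env a) (gev V env b)
  | GN a => vopp (gev V env a)
  end.

Fixpoint ladd (l1 l2 : list Z) : list Z :=
  match l1 with
  | [] => l2
  | a :: l1' => match l2 with [] => l1 | b :: l2' => (a + b)%Z :: ladd l1' l2' end
  end.
Fixpoint single (n : nat) : list Z := match n with O => [1%Z] | S k => 0%Z :: single k end.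
Fixpoint gnorm (e : gexp) : list Z :=
  match e with
  | GA n => single n
  | GZ => []
  | GP a b => ladd (gnorm a) (gnorm b)
  | GN a => map Z.opp (gnorm a)
  end.
Fixpoint den (V : NormedCSpace) (env : list V) (l : list Z) {struct l} : V :=
  match l with
  | [] => vzero
  | z :: l' => match env with [] => vzero | a :: env' => vadd (zsm V z a) (den V env' l') end
  end.

Lemma den_add V env l1 l2 : den V env (ladd l1 l2) = vadd (den V env l1) (den V env l2).
Proof.
  revert env l2; induction l1 as [|a l1 IH]; intros env l2; simpl.
  - now rewrite add0l.
  - destruct l2 as [|b l2]; destruct env as [|x env]; simpl; try now rewrite ?vadd_0, ?add0l.
    rewrite IH, zsm_add. apply add_swap4.
Qed.
Lemma den_opp V env l : den V env (map Z.opp l) = vopp (den V env l).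
Proof.
  revert env; induction l as [|a l IH]; intros [|x env]; simpl; try now rewrite opp_zero.
  now rewrite IH, zsm_opp, opp_add.
Qed.
Lemma den_single V env n : den V env (single n) = nth n env vzero.
Proof.
  revert env; induction n; intros [|x env]; simpl; auto.
  - now rewrite zsm_1, vadd_0.
  - now rewrite IHn, zsm_0, add0l.
Qed.
Lemma gsound V env e : gev V env e = den V env (gnorm e).
Proof.
  induction e; simpl.
  - now rewrite den_single.
  - reflexivity.
  - now rewrite den_add, IHe1, IHe2.
  - now rewrite den_opp, IHe.
Qed.
Lemma den_zero V env l : forallb (Z.eqb 0) l = true -> den V env l = vzero.
Proof.
  revert env; induction l as [|a l IH]; intros [|x env] H; simpl in *; auto.
  apply andb_prop in H as [H1 H2]. destruct a; try discriminate.
  now rewrite IH, zsm_0, vadd_0.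
Qed.
Lemma gcheck V env a b : forallb (Z.eqb 0) (gnorm (GP a (GN b))) = true -> gev V env a = gev V env b.
Proof.
  intro H. apply sub_eq0. change (gev V env (GP a (GN b)) = vzero).
  rewrite gsound. now apply den_zero.
Qed.

Ltac lookup x l :=
  lazymatch l with
  | (x :: _) => constr:(O)
  | (_ :: ?l') => let n := lookup x l' in constr:(S n)
  end.
Ltac mem x l :=
  lazymatch l with
  | nil => constr:(false)
  | (x :: _) => constr:(true)
  | (_ :: ?l') => mem x l'
  end.
Ltac collect t acc :=
  lazymatch t with
  | vadd ?a ?b => let acc' := collect a acc in collect b acc'
  | vopp ?a => collect a acc
  | vzero => acc
  | _ => lazymatch mem t acc with true => acc | false => constr:(t :: acc) end
  end.
Ltac reify env t :=
  lazymatch t with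
  | vadd ?a ?b => let ea := reify env a in let eb := reify env b in constr:(GP ea eb)
  | vopp ?a => let ea := reify env a in constr:(GN ea)
  | vzero => constr:(GZ)
  | _ => let n := lookup t env in constr:(GA n)
  end.
Ltac abel :=
  lazymatch goal with
  | |- @eq (vcar ?V) ?a ?b =>
    let e0 := constr:(@nil (vcar V)) in
    let e1 := collect a e0 in let env := collect b e1 in
    let ea := reify env a in let eb := reify env b in
    change (gev V env ea = gev V env eb); apply gcheck; vm_compute; reflexivity
  end.


Open Scope R_scope.

Lemma mypow_lt x y n : 0 <= x < y -> (1 <= n)%nat -> x ^ n < y ^ n.
Proof.
  intros [H1 H2] Hn. induction n as [|n IH]; [lia|].
  destruct n as [|n]; simpl; [lra|].
  simpl in IH. apply Rmult_le_0_lt_compat; auto; [apply Rmult_le_pos; auto; apply pow_le; auto|apply IH; lia].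
Qed.

Lemma nroot_nonneg x n : 0 <= nroot x n.
Proof. unfold nroot, Rpower. destruct (Rlt_dec 0 x); [left; apply exp_pos|lra]. Qed.

Lemma nroot_lt_pow x n d : 0 <= x -> (1 <= n)%nat -> nroot x n < d -> x < d ^ n.
Proof.
  intros Hx Hn H. pose proof (nroot_nonneg x n) as H0.
  unfold nroot in H. destruct (Rlt_dec 0 x) as [Hp|Hp].
  - assert (E : x = (Rpower x (/ INR n)) ^ n).
    { rewrite <- Rpower_pow by (unfold Rpower; apply exp_pos).
      rewrite Rpower_mult, Rinv_l, Rpower_1; auto. apply not_0_INR; lia. }
    rewrite E. apply mypow_lt; auto. split; [left; unfold Rpower; apply exp_pos|auto].
  - assert (x = 0) by lra. subst. apply pow_lt. lra.
Qed.

Lemma pow_lt_nroot x n e : 0 <= x -> (1 <= n)%nat -> 0 < e -> x < e ^ n -> nroot x n < e.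
Proof.
  intros Hx Hn He H. unfold nroot. destruct (Rlt_dec 0 x) as [Hp|Hp]; [|auto].
  apply Rlt_le_trans with (Rpower (e ^ n) (/ INR n)).
  - apply Rlt_Rpower_l; auto. apply Rinv_0_lt_compat, lt_0_INR; lia.
  - rewrite <- Rpower_pow by auto. rewrite Rpower_mult, Rinv_r, Rpower_1; [lra|auto|].
    apply not_0_INR; lia.
Qed.

Lemma INR_le_2pow n : INR n <= 2 ^ n.
Proof. induction n. simpl; lra. rewrite S_INR; simpl. pose proof (pow_R1_Rle 2 n ltac:(lra)). lra. Qed.

Lemma qn_transfer (a b : nat -> R) (c : R) (k : nat) :
  (forall n, 0 <= a n) -> (forall n, (k <= n)%nat -> 0 <= b n) -> 0 < c ->
  (forall n, (k <= n)%nat -> b n <= c * a (n - k)%nat) ->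
  Un_cv (fun n => nroot (a n) n) 0 -> Un_cv (fun n => nroot (b n) n) 0.
Proof.
  intros Ha Hb Hc Hab Hcv eps Heps.
  set (d := eps / 2).
  assert (Hd : 0 < d) by (unfold d; lra).
  destruct (Hcv d Hd) as [N0 HN0].
  assert (Hdk : 0 < d ^ k) by (apply pow_lt; auto).
  destruct (INR_unbounded (c / d ^ k)) as [N1 HN1].
  exists (N1 + k + N0 + 1)%nat. intros n Hn.
  unfold R_dist. rewrite Rminus_0_r, Rabs_pos_eq by apply nroot_nonneg.
  apply pow_lt_nroot; [apply Hb; lia|lia|auto|].
  assert (Ham : a (n - k)%nat < d ^ (n - k)).
  { apply nroot_lt_pow; auto; [lia|]. specialize (HN0 (n - k)%nat ltac:(lia)).
    unfold R_dist in HN0. rewrite Rminus_0_r, Rabs_pos_eq in HN0 by apply nroot_nonneg. auto. }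
  assert (H2 : c < 2 ^ n * d ^ k).
  { apply Rmult_lt_reg_r with (/ d ^ k). apply Rinv_0_lt_compat; auto.
    rewrite Rmult_assoc, Rinv_r, Rmult_1_r by lra.
    apply Rlt_le_trans with (INR N1). unfold Rdiv in HN1; lra.
    apply Rle_trans with (INR n). apply le_INR; lia. apply INR_le_2pow. }
  assert (Hdn : 0 < d ^ (n - k)) by (apply pow_lt; auto).
  apply Rle_lt_trans with (c * a (n - k)%nat). apply Hab; lia.
  apply Rle_lt_trans with (c * d ^ (n - k)).
  apply Rmult_le_compat_l; lra.
  replace (eps ^ n) with (2 ^ n * d ^ k * d ^ (n - k)).
  apply Rmult_lt_compat_r; auto.
  replace eps with (2 * d) by (unfold d; lra). rewrite Rpow_mult_distr, Rmult_assoc, <- pow_add.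
  f_equal. f_equal. lia.
Qed.

Open Scope R_scope.

Section Norm.
Variable V : NormedCSpace.
Implicit Types x y : V.

Lemma vscal0 x : vscal C0 x = vzero.
Proof.
  apply (add_cancel_l _ (vscal C0 x)). rewrite <- vscal_distr_c, vadd_0.
  f_equal. unfold Cadd, C0; simpl. f_equal; lra.
Qed.
Lemma Cmod_real r : Cmod (r, 0) = Rabs r.
Proof.
  unfold Cmod; cbn [fst snd]. replace (r ^ 2 + 0 ^ 2) with (Rsqr r) by (unfold Rsqr; ring).
  apply sqrt_Rsqr_abs.
Qed.
Lemma vnorm_zero : vnorm (@vzero V) = 0.
Proof.
  rewrite <- (vscal0 vzero), vnorm_scal. unfold C0. rewrite Cmod_real, Rabs_R0. ring.
Qed.
Lemma vopp_scal x : vopp x = vscal (-1, 0) x.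
Proof.
  symmetry. apply opp_unique. rewrite <- (vscal_1 _ x) at 1. rewrite <- vscal_distr_c.
  replace (Cadd Defs.C1 (-1, 0)) with C0. apply vscal0.
  unfold Cadd, Defs.C1, C0; simpl; f_equal; lra.
Qed.
Lemma vnorm_opp x : vnorm (vopp x) = vnorm x.
Proof. rewrite vopp_scal, vnorm_scal, Cmod_real. replace (-1) with (- (1)) by ring. rewrite Rabs_Ropp, Rabs_R1. ring. Qed.
Lemma vnorm_sub x y : vnorm (vadd x (vopp y)) <= vnorm x + vnorm y.
Proof. rewrite <- (vnorm_opp y). apply vnorm_triangle. Qed.
End Norm.

Section Lin.
Variables V W : NormedCSpace.

Lemma lin_add (f : V -> W) : is_bounded_linear f -> forall x y, f (vadd x y) = vadd (f x) (f y).
Proof. intros [H _]; exact H. Qed.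
Lemma lin_scal (f : V -> W) : is_bounded_linear f -> forall a x, f (vscal a x) = vscal a (f x).
Proof. intros [_ [H _]]; exact H. Qed.
Lemma lin_zero (f : V -> W) : is_bounded_linear f -> f vzero = vzero.
Proof.
  intro H. apply (add_cancel_l _ (f vzero)). rewrite <- lin_add, !vadd_0; auto.
Qed.
Lemma lin_opp (f : V -> W) : is_bounded_linear f -> forall x, f (vopp x) = vopp (f x).
Proof.
  intros H x. apply opp_unique. rewrite <- lin_add, vadd_opp by auto. apply lin_zero; auto.
Qed.
Lemma lin_bound (f : V -> W) : is_bounded_linear f ->
  exists M, 0 <= M /\ forall x, vnorm (f x) <= M * vnorm x.
Proof.
  intros [_ [_ [M HM]]]. exists (Rabs M). split. apply Rabs_pos.
  intro x. eapply Rle_trans. apply HM. apply Rmult_le_compat_r. apply vnorm_nonneg. apply RRle_abs.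
Qed.
Lemma lin_id : is_bounded_linear (fun x : V => x).
Proof. split; [|split]; auto. exists 1; intro; lra. Qed.

Definition ball1 (f : V -> W) := fun r => exists x : V, vnorm x <= 1 /\ r = vnorm (f x).

Lemma opnorm_spec (f : V -> W) M : (forall x, vnorm (f x) <= M * vnorm x) ->
  is_lub (ball1 f) (opnorm f).
Proof.
  intro HM. unfold opnorm.
  apply epsilon_spec.
  destruct (completeness (ball1 f)) as [m Hm].
  - exists (Rabs M). intros r [x [Hx ->]]. eapply Rle_trans. apply HM.
    eapply Rle_trans. apply Rmult_le_compat_r. apply vnorm_nonneg. apply RRle_abs.
    rewrite <- (Rmult_1_r (Rabs M)) at 2. apply Rmult_le_compat_l. apply Rabs_pos. auto.
  - exists (vnorm (f vzero)). exists vzero. rewrite vnorm_zero. split; auto; lra.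
  - exists m; exact Hm.
Qed.

Lemma opnorm_le (f : V -> W) c : 0 <= c -> (forall x, vnorm (f x) <= c * vnorm x) -> opnorm f <= c.
Proof.
  intros Hc H. apply (opnorm_spec f c H). intros r [x [Hx ->]].
  eapply Rle_trans. apply H. rewrite <- (Rmult_1_r c) at 2. apply Rmult_le_compat_l; auto.
Qed.

Lemma opnorm_nonneg (f : V -> W) : is_bounded_linear f -> 0 <= opnorm f.
Proof.
  intro Hf. destruct (lin_bound f Hf) as [M [_ HM]].
  apply Rle_trans with (vnorm (f vzero)). apply vnorm_nonneg.
  apply (opnorm_spec f M HM). exists vzero. rewrite vnorm_zero. split; auto; lra.
Qed.

Lemma opnorm_bound (f : V -> W) : is_bounded_linear f -> forall w, vnorm (f w) <= opnorm f * vnorm w.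
Proof.
  intros Hf w. destruct (lin_bound f Hf) as [M [_ HM]].
  destruct (Req_dec (vnorm w) 0) as [Hz|Hz].
  - pose proof (vnorm_eq0 _ _ Hz) as Hw0. rewrite Hz. rewrite Hw0, lin_zero, vnorm_zero by auto. lra.
  - pose proof (vnorm_nonneg _ w) as Hw.
    assert (Hp : 0 < vnorm w) by lra.
    set (u := vscal (/ vnorm w, 0) w).
    assert (Hu : vnorm u = 1).
    { unfold u. rewrite vnorm_scal, Cmod_real, Rabs_pos_eq. field; lra.
      left; apply Rinv_0_lt_compat; auto. }
    assert (Hfu : vnorm (f u) <= opnorm f).
    { apply (opnorm_spec f M HM). exists u. split; auto; lra. }
    unfold u in Hfu. rewrite lin_scal, vnorm_scal, Cmod_real, Rabs_pos_eq in Hfu by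
      (auto; left; apply Rinv_0_lt_compat; auto).
    apply Rmult_le_reg_l with (/ vnorm w). apply Rinv_0_lt_compat; auto.
    replace (/ vnorm w * (opnorm f * vnorm w)) with (opnorm f) by (field; lra). auto.
Qed.
End Lin.
Arguments lin_add {V W}. Arguments lin_scal {V W}. Arguments lin_zero {V W}. Arguments lin_opp {V W}. Arguments lin_bound {V W}.
Arguments opnorm_spec {V W}. Arguments opnorm_le {V W}. Arguments opnorm_nonneg {V W}. Arguments opnorm_bound {V W}. Arguments lin_id {V}.

Lemma lin_comp {V W U : NormedCSpace} (f : V -> W) (g : W -> U) : is_bounded_linear f -> is_bounded_linear g ->
  is_bounded_linear (fun x => g (f x)).
Proof.
  intros Hf Hg. destruct (lin_bound f Hf) as [Mf [Hf0 Hf1]]. destruct (lin_bound g Hg) as [Mg [Hg0 Hg1]].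
  split; [|split].
  - intros; rewrite !lin_add; auto.
  - intros; rewrite !lin_scal; auto.
  - exists (Mg * Mf). intro x. eapply Rle_trans. apply Hg1. rewrite Rmult_assoc.
    apply Rmult_le_compat_l; auto.
Qed.

Lemma opow_S (Z : NormedCSpace) (a : Z -> Z) n z : opow a (S n) z = a (opow a n z).
Proof. reflexivity. Qed.
Lemma opow_lin (Z : NormedCSpace) (a : Z -> Z) n : is_bounded_linear a -> is_bounded_linear (opow a n).
Proof.
  intro Ha. induction n. apply lin_id.
  change (is_bounded_linear (fun z => a (opow a n z))). apply lin_comp; auto.
Qed.

Lemma opnorm_nonneg' {V W : NormedCSpace} (f : V -> W) M : (forall x, vnorm (f x) <= M * vnorm x) -> 0 <= opnorm f.
Proof.
  intro HM.
  apply Rle_trans with (vnorm (f vzero)). apply vnorm_nonneg.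
  apply (opnorm_spec f M HM). exists vzero. rewrite vnorm_zero. split; auto; lra.
Qed.

Lemma vscal_opp {V : NormedCSpace} a (x : V) : vscal a (vopp x) = vopp (vscal a x).
Proof.
  apply opp_unique. rewrite <- vscal_distr_v, vadd_opp. apply (add_cancel_l _ (vscal a vzero)).
  rewrite <- vscal_distr_v, !vadd_0. reflexivity.
Qed.

Lemma lin_plus {V W : NormedCSpace} (f g : V -> W) : is_bounded_linear f -> is_bounded_linear g ->
  is_bounded_linear (fun z => vadd (f z) (g z)).
Proof.
  intros Hf Hg. destruct (lin_bound f Hf) as [Mf [Hf0 Hf1]]. destruct (lin_bound g Hg) as [Mg [Hg0 Hg1]].
  split; [|split].
  - intros; rewrite !lin_add by auto. abel.
  - intros; rewrite !lin_scal, vscal_distr_v by auto. reflexivity.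
  - exists (Mf + Mg). intro x. eapply Rle_trans. apply vnorm_triangle.
    specialize (Hf1 x); specialize (Hg1 x). lra.
Qed.
Lemma lin_neg {V W : NormedCSpace} (f : V -> W) : is_bounded_linear f ->
  is_bounded_linear (fun z => vopp (f z)).
Proof.
  intros Hf. destruct (lin_bound f Hf) as [Mf [Hf0 Hf1]].
  split; [|split].
  - intros; rewrite !lin_add by auto. abel.
  - intros; rewrite !lin_scal, vscal_opp by auto. reflexivity.
  - exists Mf. intro x. rewrite vnorm_opp. auto.
Qed.
Lemma lin_fst (V W : NormedCSpace) : is_bounded_linear (fun p : DirectSum V W => fst p).
Proof.
  split; [|split]. intros [] []; reflexivity. intros a []; reflexivity.
  exists 1. intros [x y]. cbn. unfold ds_norm; cbn. pose proof (vnorm_nonneg _ y). lra.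
Qed.
Lemma lin_snd (V W : NormedCSpace) : is_bounded_linear (fun p : DirectSum V W => snd p).
Proof.
  split; [|split]. intros [] []; reflexivity. intros a []; reflexivity.
  exists 1. intros [x y]. cbn. unfold ds_norm; cbn. pose proof (vnorm_nonneg _ x). lra.
Qed.
Lemma lin_pair {U V W : NormedCSpace} (f : U -> V) (g : U -> W) : is_bounded_linear f -> is_bounded_linear g ->
  is_bounded_linear (fun z => (f z, g z) : DirectSum V W).
Proof.
  intros Hf Hg. destruct (lin_bound f Hf) as [Mf [Hf0 Hf1]]. destruct (lin_bound g Hg) as [Mg [Hg0 Hg1]].
  split; [|split].
  - intros; cbn; unfold ds_add; cbn. rewrite !lin_add by auto. reflexivity.
  - intros; cbn; unfold ds_scal; cbn. rewrite !lin_scal by auto. reflexivity.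
  - exists (Mf + Mg). intro x. cbn. unfold ds_norm; cbn.
    specialize (Hf1 x); specialize (Hg1 x). pose proof (vnorm_nonneg _ x). nra.
Qed.

Open Scope R_scope.

Section Alg.
Variables X Y : NormedCSpace.
Variables (B : Y -> X) (C : X -> Y) (D G : Y -> Y).
Hypothesis HB : is_bounded_linear B.
Hypothesis HC : is_bounded_linear C.
Hypothesis HD : is_bounded_linear D.
Hypothesis HG : is_bounded_linear G.
Hypothesis HDG : forall z, D (G z) = G (D z).
Hypothesis HGDG : forall z, G (D (G z)) = G z.
Hypothesis HDCB : forall y, D (C (B y)) = vzero.
Hypothesis HCBCB : forall y, C (B (C (B y))) = vzero.

Let Badd := lin_add B HB. Let Bopp := lin_opp B HB. Let Bzero := lin_zero B HB.
Let Caddl := lin_add C HC. Let Copp := lin_opp C HC. Let Czero := lin_zero C HC.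
Let Dadd := lin_add D HD. Let Dopp := lin_opp D HD. Let Dzero := lin_zero D HD.
Let Gadd := lin_add G HG. Let Gopp := lin_opp G HG. Let Gzero := lin_zero G HG.

Lemma GGD z : G (G (D z)) = G z.
Proof. rewrite <- HDG. apply HGDG. Qed.
Lemma GCB y : G (C (B y)) = vzero.
Proof. rewrite <- GGD, HDCB, Gzero, Gzero. reflexivity. Qed.

Fixpoint Fp (m : nat) (z : Y) : Y :=
  match m with O => vadd z (vopp (G (D z))) | S k => D (Fp k z) end.
Lemma DFp m z : D (Fp m z) = Fp (S m) z.
Proof. reflexivity. Qed.
Lemma GFp m z : G (Fp m z) = vzero.
Proof.
  induction m; simpl.
  - rewrite Gadd, Gopp, GGD. apply vadd_opp.
  - rewrite <- HDG, IHm. apply Dzero.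
Qed.

Ltac simp := repeat progress (rewrite ?Badd, ?Bopp, ?Bzero, ?Caddl, ?Copp, ?Czero,
  ?Dadd, ?Dopp, ?Dzero, ?Gadd, ?Gopp, ?Gzero, ?DFp, ?GFp, ?HDCB, ?HCBCB, ?GCB, ?HDG, ?GGD).

Definition H (y : Y) : Y := vadd (G y) (C (B (G (G (G y))))).
Definition W (p : X * Y) : Y := vadd (G (C (fst p))) (snd p).
Definition Xd (p : DirectSum X Y) : DirectSum X Y := (B (H (G (W p))), H (W p)).
Definition M := opmatrix B C D.

Lemma comm_MX : (fun z => M (Xd z)) = (fun z => Xd (M z)).
Proof.
  apply functional_extensionality. intros [x y].
  unfold M, Xd, opmatrix, W, H; cbn [fst snd]. f_equal; simp; abel.
Qed.

Lemma XMX : (fun z => Xd (M (Xd z))) = Xd.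
Proof.
  apply functional_extensionality. intros [x y].
  unfold M, Xd, opmatrix, W, H; cbn [fst snd]. f_equal; simp; abel.
Qed.

Definition N := fun z => vadd (M z) (vopp (M (M (Xd z)))).

Definition ee (k : nat) (z : Y) : Y :=
  match k with
  | O => vopp (H z)
  | S O => vadd (vadd z (vopp (G (D z)))) (vopp (C (B (G (G z)))))
  | S (S O) => vadd (vadd (D z) (vopp (G (D (D z))))) (vopp (C (B (G z))))
  | S (S (S j)) => vadd (Fp (S (S j)) z) (C (B (Fp j z)))
  end.

Lemma N_formula x y : N (x, y) = (B (vadd (ee 0 (C x)) (ee 1 y)), vadd (ee 1 (C x)) (ee 2 y)).
Proof.
  unfold N, M, Xd, opmatrix, W. cbn [ee]. unfold H. cbn [vadd vopp DirectSum]. unfold ds_add, ds_opp. cbn [fst snd]. f_equal; simp; abel.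
Qed.

Lemma Fp_add m u v : Fp m (vadd u v) = vadd (Fp m u) (Fp m v).
Proof. induction m; simpl. simp; abel. rewrite IHm; simp; abel. Qed.

Lemma ee_add k u v : ee k (vadd u v) = vadd (ee k u) (ee k v).
Proof.
  destruct k as [|[|[|j]]]; cbn [ee]; unfold H; rewrite ?Fp_add; simp; abel.
Qed.
Lemma ee_K0 z : ee 0 (C (B z)) = vzero.
Proof. cbn [ee]; unfold H; simp; abel. Qed.
Lemma ee_K1 z : ee 1 (C (B z)) = C (B z).
Proof. cbn [ee]; simp; abel. Qed.
Lemma ee_idem k w : ee 1 (ee (S k) w) = ee (S k) w.
Proof.
  destruct k as [|[|j]]; cbn [ee]; simp; abel.
Qed.
Lemma ee_step k w : vadd (C (B (ee k w))) (ee 2 (ee (S k) w)) = ee (S (S k)) w.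
Proof.
  destruct k as [|[|[|i]]].
  - cbn [ee]; unfold H; simp; abel.
  - cbn [ee Fp]; simp; abel.
  - cbn [ee Fp]; simp; abel.
  - cbn [ee]; simp; abel.
Qed.

Lemma N_pow m x y : opow N (S m) (x, y) =
  (B (vadd (ee m (C x)) (ee (S m) y)), vadd (ee (S m) (C x)) (ee (S (S m)) y)).
Proof.
  induction m.
  - apply N_formula.
  - rewrite opow_S, IHm, N_formula. f_equal.
    + rewrite ee_K0, add0l, ee_add, !ee_idem. reflexivity.
    + rewrite ee_K1, ee_add, Badd, Caddl.
      rewrite <- (ee_step m (C x)), <- (ee_step (S m) y). abel.
Qed.

Definition E' (z : Y) : Y := vadd (D z) (vopp (D (D (G z)))).

Lemma Fp_E j m w : Fp (j + m) w = opow E' j (Fp m w).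
Proof.
  induction j; simpl. reflexivity.
  rewrite <- IHj. unfold E'. rewrite GFp, Dzero, Dzero. abel.
Qed.

Lemma ee_E i r v : ee (S (S (S (i + r)))) v =
  vadd (opow E' i (Fp (S (S r)) v)) (C (B (opow E' i (Fp r v)))).
Proof.
  cbn [ee]. replace (S (S (i + r))) with (i + S (S r))%nat by lia. rewrite !Fp_E. reflexivity.
Qed.

Lemma E'_lin : is_bounded_linear E'.
Proof.
  unfold E'. apply lin_plus. exact HD. apply lin_neg.
  apply (lin_comp (fun z => D (G z)) D); auto. apply lin_comp; auto.
Qed.

Lemma Fp_lin m : is_bounded_linear (Fp m).
Proof.
  induction m.
  - change (is_bounded_linear (fun z => vadd z (vopp (G (D z))))).
    apply lin_plus. apply lin_id. apply lin_neg. apply lin_comp; auto.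
  - change (is_bounded_linear (fun z => D (Fp m z))). apply lin_comp; auto.
Qed.

Lemma ee_bound r : exists A, 0 <= A /\ forall i v,
  vnorm (ee (S (S (S (i + r)))) v) <= opnorm (opow E' i) * A * vnorm v.
Proof.
  destruct (lin_bound _ (Fp_lin (S (S r)))) as [A1 [HA1 HA1']].
  destruct (lin_bound _ (Fp_lin r)) as [A2 [HA2 HA2']].
  destruct (lin_bound _ HB) as [MB [HMB HMB']].
  destruct (lin_bound _ HC) as [MC [HMC HMC']].
  exists (A1 + MC * MB * A2). split. apply Rplus_le_le_0_compat; auto. repeat apply Rmult_le_pos; auto.
  intros i v. rewrite ee_E.
  pose proof (opnorm_nonneg _ (opow_lin _ _ i E'_lin)) as HQ.
  set (Q := opnorm (opow E' i)) in *.
  pose proof (opnorm_bound _ (opow_lin _ _ i E'_lin) (Fp (S (S r)) v)) as H1.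
  pose proof (opnorm_bound _ (opow_lin _ _ i E'_lin) (Fp r v)) as H2.
  fold Q in H1, H2.
  pose proof (HA1' v) as H3. pose proof (HA2' v) as H4.
  pose proof (HMC' (B (opow E' i (Fp r v)))) as H5.
  pose proof (HMB' (opow E' i (Fp r v))) as H6.
  pose proof (vnorm_nonneg _ v).
  pose proof (vnorm_nonneg _ (Fp r v)).
  pose proof (vnorm_nonneg _ (Fp (S (S r)) v)).
  pose proof (vnorm_nonneg _ (B (opow E' i (Fp r v)))).
  pose proof (vnorm_nonneg _ (opow E' i (Fp r v))).
  eapply Rle_trans. apply vnorm_triangle.
  assert (vnorm (opow E' i (Fp (S (S r)) v)) <= Q * A1 * vnorm v).
  { eapply Rle_trans. apply H1. rewrite Rmult_assoc. apply Rmult_le_compat_l; auto. }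
  assert (vnorm (opow E' i (Fp r v)) <= Q * A2 * vnorm v).
  { eapply Rle_trans. apply H2. rewrite Rmult_assoc. apply Rmult_le_compat_l; auto. }
  assert (vnorm (C (B (opow E' i (Fp r v)))) <= MC * MB * (Q * A2 * vnorm v)).
  { eapply Rle_trans. apply H5. rewrite Rmult_assoc. apply Rmult_le_compat_l; auto.
    eapply Rle_trans. apply H6. apply Rmult_le_compat_l; auto. }
  assert (Q * (A1 + MC * MB * A2) * vnorm v = Q * A1 * vnorm v + MC * MB * (Q * A2 * vnorm v)) by ring. lra.
Qed.

Lemma Xd_lin : is_bounded_linear Xd.
Proof.
  assert (HW : @is_bounded_linear (DirectSum X Y) Y W).
  { unfold W. apply (@lin_plus (DirectSum X Y) Y (fun p : DirectSum X Y => G (C (fst p))) (fun p : DirectSum X Y => snd p)).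
    apply (lin_comp (fun p : DirectSum X Y => fst p) (fun z => G (C z))).
    apply lin_fst. apply lin_comp; auto. apply lin_snd. }
  assert (HH : is_bounded_linear H).
  { unfold H. apply lin_plus; auto. apply (lin_comp (fun z => G (G (G z))) (fun z => C (B z))).
    apply (lin_comp (fun z => G (G z))); auto. apply lin_comp; auto. apply lin_comp; auto. }
  unfold Xd. apply (@lin_pair (DirectSum X Y) X Y (fun z => B (H (G (W z)))) (fun z => H (W z))).
  - apply (@lin_comp (DirectSum X Y) Y X (fun z => H (G (W z))) B); auto.
    apply (@lin_comp (DirectSum X Y) Y Y (fun z => G (W z)) H); auto.
    apply (@lin_comp (DirectSum X Y) Y Y W G); auto.
  - apply (@lin_comp (DirectSum X Y) Y Y W H); auto.
Qed.

Lemma N_qn : quasinilpotent E' -> quasinilpotent N.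
Proof.
  intro HQ.
  destruct (ee_bound 0) as [A0 [HA0 HA0']].
  destruct (ee_bound 1) as [A1 [HA1 HA1']].
  destruct (ee_bound 2) as [A2 [HA2 HA2']].
  destruct (lin_bound _ HB) as [MB [HMB HMB']].
  destruct (lin_bound _ HC) as [MC [HMC HMC']].
  set (A := A0 + A1 + A2).
  set (c := (MB + 1) * A * (MC + 1) + 1).
  assert (HA : 0 <= A) by (unfold A; lra).
  assert (Hc : 0 < c) by (unfold c; assert (0 <= (MB + 1) * A * (MC + 1)) by (repeat apply Rmult_le_pos; lra); lra).
  assert (Hbd : forall i p, vnorm (opow N (S (S (S (S i)))) p) <= c * opnorm (opow E' i) * vnorm p).
  { intros i [x y]. rewrite N_pow.
    pose proof (opnorm_nonneg _ (opow_lin _ _ i E'_lin)) as HQi.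
    set (Q := opnorm (opow E' i)) in *.
    pose proof (HA0' i (C x)) as h1. pose proof (HA1' i y) as h2.
    pose proof (HA1' i (C x)) as h3. pose proof (HA2' i y) as h4.
    replace (i + 0)%nat with i in h1 by lia.
    replace (S (S (S (i + 1)))) with (S (S (S (S i)))) in h2, h3 by lia.
    replace (S (S (S (i + 2)))) with (S (S (S (S (S i))))) in h4 by lia.
    fold Q in h1, h2, h3, h4.
    set (a1 := ee (S (S (S i))) (C x)) in *.
    set (a2 := ee (S (S (S (S i)))) y) in *.
    set (b1 := ee (S (S (S (S i)))) (C x)) in *.
    set (b2 := ee (S (S (S (S (S i))))) y) in *.
    cbn [vnorm DirectSum]. unfold ds_norm. cbn [fst snd].
    pose proof (HMB' (vadd a1 a2)) as g1.
    pose proof (vnorm_triangle _ a1 a2) as g2.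
    pose proof (vnorm_triangle _ b1 b2) as g3.
    pose proof (HMC' x) as g4.
    pose proof (vnorm_nonneg _ x). pose proof (vnorm_nonneg _ y). pose proof (vnorm_nonneg _ (C x)).
    pose proof (vnorm_nonneg _ a1). pose proof (vnorm_nonneg _ a2).
    assert (k1 : vnorm a1 <= Q * A * MC * vnorm x).
    { eapply Rle_trans. apply h1. apply Rle_trans with (Q * A * vnorm (C x)).
      apply Rmult_le_compat_r; auto. apply Rmult_le_compat_l; auto. unfold A; lra.
      replace (Q * A * MC * vnorm x) with (Q * A * (MC * vnorm x)) by ring.
      apply Rmult_le_compat_l; [apply Rmult_le_pos; auto|auto]. }
    assert (k2 : vnorm a2 <= Q * A * vnorm y).
    { eapply Rle_trans. apply h2. apply Rmult_le_compat_r; auto. apply Rmult_le_compat_l; auto. unfold A; lra. }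
    assert (k3 : vnorm b1 <= Q * A * MC * vnorm x).
    { eapply Rle_trans. apply h3. apply Rle_trans with (Q * A * vnorm (C x)).
      apply Rmult_le_compat_r; auto. apply Rmult_le_compat_l; auto. unfold A; lra.
      replace (Q * A * MC * vnorm x) with (Q * A * (MC * vnorm x)) by ring.
      apply Rmult_le_compat_l; [apply Rmult_le_pos; auto|auto]. }
    assert (k4 : vnorm b2 <= Q * A * vnorm y).
    { eapply Rle_trans. apply h4. apply Rmult_le_compat_r; auto. apply Rmult_le_compat_l; auto. unfold A; lra. }
    assert (HQA : 0 <= Q * A) by (apply Rmult_le_pos; auto).
    assert (vnorm (B (vadd a1 a2)) <= MB * (Q * A * MC * vnorm x + Q * A * vnorm y)).
    { eapply Rle_trans. apply g1. apply Rmult_le_compat_l; auto. lra. }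
    assert (T1 : 0 <= (MB + 1) * (Q * A) * (vnorm x + MC * vnorm y)).
    { repeat apply Rmult_le_pos; try lra. apply Rplus_le_le_0_compat; auto. apply Rmult_le_pos; auto. }
    assert (T2 : 0 <= Q * (vnorm x + vnorm y)) by (apply Rmult_le_pos; lra).
    assert (T3 : c * Q * (vnorm x + vnorm y) = (MB + 1) * (Q * A * MC * vnorm x + Q * A * vnorm y)
       + (MB + 1) * (Q * A) * (vnorm x + MC * vnorm y) + Q * (vnorm x + vnorm y)) by (unfold c; ring).
    rewrite T3. lra. }
  apply (qn_transfer (fun n => opnorm (opow E' n)) (fun n => opnorm (opow N n)) c 4).
  - intro n. apply opnorm_nonneg, opow_lin, E'_lin.
  - intros n Hn. destruct n as [|[|[|[|i]]]]; try lia.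
    apply (opnorm_nonneg' _ _ (Hbd i)).
  - exact Hc.
  - intros n Hn. destruct n as [|[|[|[|i]]]]; try lia.
    replace (S (S (S (S i))) - 4)%nat with i by lia.
    apply opnorm_le. pose proof (opnorm_nonneg _ (opow_lin _ _ i E'_lin)). nra.
    intro p. apply Hbd.
  - exact HQ.
Qed.
End Alg.

Theorem lemma3p10 (X Y : NormedCSpace) (HX : complete X) (HY : complete Y)
  (B : Y -> X) (C : X -> Y) (D : Y -> Y)
  (HB : is_bounded_linear B) (HC : is_bounded_linear C) (HD : is_bounded_linear D)
  (HDd : has_gDrazin D)
  (HDCB : (fun y => D (C (B y))) = (fun _ => vzero))
  (HCBCB : (fun y => C (B (C (B y)))) = (fun _ => vzero)) :
  has_gDrazin (opmatrix B C D).
Proof.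
  destruct HDd as [G [HG [HGDG [HDG HQ]]]].
  assert (HGDG' : forall z, G (D (G z)) = G z) by (intro z; exact (f_equal (fun f => f z) HGDG)).
  assert (HDG' : forall z, D (G z) = G (D z)) by (intro z; exact (f_equal (fun f => f z) HDG)).
  assert (HDCB' : forall y, D (C (B y)) = vzero) by (intro y; exact (f_equal (fun f => f y) HDCB)).
  assert (HCBCB' : forall y, C (B (C (B y))) = vzero) by (intro y; exact (f_equal (fun f => f y) HCBCB)).
  exists (Xd X Y B C G). split; [|split; [|split]].
  - apply Xd_lin; auto.
  - eapply XMX; eauto.
  - eapply comm_MX; eauto.
  - eapply N_qn; eauto.
Qed.
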